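(* Let $(X,d)$ be a complete metric space, fix $\lambda\in(0,1)$, and let $W:X\times X\times[0,1]\to P_{cl}(X)$ be a mapping such that (i) $W(x,x,\mu)=\{x\}$ for all $x\in X$, $\mu\in(0,1)$, and (ii) for $\mu\in(0,1)$ and $x,y\in X$, $W(x,y,\mu)=\{x\}$ implies $y=x$. Let $T:X\to P_{cl}(X)$ be a multivalued operator with $SFix(T)\neq\emptyset$ and let $T_W(x)=W(x,T(x),\lambda):=\bigcup_{y\in T(x)}W(x,y,\lambda)$ be the Takahashi admissible perturbation of $T$. Suppose there exist $\alpha,\beta,\gamma\ge0$ with $\alpha+\beta+\gamma<1$ such that $$H(W(x,T(x),\lambda),W(y,T(y),\lambda))\le\alpha d(x,y)+\beta D(x,W(y,T(y),\lambda))+\gamma D(y,W(x,T(x),\lambda))$$ for all $x,y\in X$. Then: (i) $Fix(T)=SFix(T)=\{x^*\}$ for some $x^*\in X$; (ii) if moreover there exists $l\in(0,1)$ with $H(T(x),\{x^*\})\le l\,H(W(x,T(x),\lambda),\{x^*\})$ for all $x\in X$, then $H(T^n(x),\{x^*\})\to0$ for each $x\in X$; (iii) if moreover there exists $L>0$ with $D(x,W(x,T(x),\lambda))\le L\,D(x,T(x))$ for all $x\in X$, then for some $\xi\in(0,1)$, $$d(x,x^* )\le\frac{(1+\gamma)L}{(1-\alpha-\beta)\xi}D(x,T(x))\quad\text{for all }x\in X.$$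
   Context: $P_{cl}(X)$ is the family of nonempty closed subsets of $X$. $Fix(T)=\{x:x\in T(x)\}$, $SFix(T)=\{x:T(x)=\{x\}\}$. For nonempty $A,B\subseteq X$: $D(a,B)=\inf_{b\in B}d(a,b)$, $e(A,B)=\sup_{a\in A}D(a,B)$, $H(A,B)=\max\{e(A,B),e(B,A)\}$. Iterates: $T^0(x)=\{x\}$, $T^n(x)=\bigcup_{y\in T^{n-1}(x)}T(y)$. *)

(* Defs.v *)
From Stdlib Require Import Reals.
From Coquelicot Require Import Coquelicot.
Open Scope R_scope.

Section MetricDefs.
Context {X : Type}.

Definition is_metric (d : X -> X -> R) : Prop :=
  (forall x y, 0 <= d x y) /\
  (forall x y, d x y = 0 <-> x = y) /\
  (forall x y, d x y = d y x) /\
  (forall x y z, d x z <= d x y + d y z).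

Definition cauchy_seq (d : X -> X -> R) (u : nat -> X) : Prop :=
  forall eps, 0 < eps -> exists N, forall m n, (N <= m)%nat -> (N <= n)%nat ->
    d (u m) (u n) < eps.

Definition converges_to (d : X -> X -> R) (u : nat -> X) (l : X) : Prop :=
  forall eps, 0 < eps -> exists N, forall n, (N <= n)%nat -> d (u n) l < eps.

Definition complete_metric (d : X -> X -> R) : Prop :=
  forall u, cauchy_seq d u -> exists l, converges_to d u l.

Definition nonempty (A : X -> Prop) : Prop := exists a, A a.

Definition closed_set (d : X -> X -> R) (A : X -> Prop) : Prop :=
  forall x, (forall eps, 0 < eps -> exists a, A a /\ d x a < eps) -> A x.

Definition Pcl (d : X -> X -> R) (A : X -> Prop) : Prop :=
  nonempty A /\ closed_set d A.

Definition is_singleton (A : X -> Prop) (x : X) : Prop :=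
  forall z, A z <-> z = x.

Definition singleton (x : X) : X -> Prop := fun z => z = x.

(* D(a,B) = inf_{b in B} d(a,b)  (a real number for nonempty B) *)
Definition Dist (d : X -> X -> R) (a : X) (B : X -> Prop) : R :=
  real (Glb_Rbar (fun r => exists b, B b /\ r = d a b)).

Definition excess (d : X -> X -> R) (A B : X -> Prop) : Rbar :=
  Lub_Rbar (fun r => exists a, A a /\ r = Dist d a B).

Definition Rbar_maxi (a b : Rbar) : Rbar :=
  match Rbar_le_dec a b with left _ => b | right _ => a end.

Definition Haus (d : X -> X -> R) (A B : X -> Prop) : Rbar :=
  Rbar_maxi (excess d A B) (excess d B A).

Definition is_fix (T : X -> X -> Prop) (x : X) : Prop := T x x.
Definition is_sfix (T : X -> X -> Prop) (x : X) : Prop := is_singleton (T x) x.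

Definition Wset (W : X -> X -> R -> X -> Prop) (x : X) (A : X -> Prop) (mu : R)
  : X -> Prop := fun z => exists y, A y /\ W x y mu z.

Definition TW (W : X -> X -> R -> X -> Prop) (T : X -> X -> Prop) (lam : R) (x : X)
  : X -> Prop := Wset W x (T x) lam.

Fixpoint iterT (T : X -> X -> Prop) (n : nat) (x : X) : X -> Prop :=
  match n with
  | O => fun z => z = x
  | S m => fun z => exists y, iterT T m x y /\ T y z
  end.

End MetricDefs.

(* Main.v *)
Require Import Defs.
From Stdlib Require Import Reals Lra.
From Coquelicot Require Import Coquelicot.
Open Scope R_scope.

Section H.
Context {X : Type} (d : X -> X -> R) (Hm : is_metric d).

Lemma d_nonneg x y : 0 <= d x y. Proof. apply Hm. Qed.
Lemma d_sym x y : d x y = d y x. Proof. apply Hm. Qed.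
Lemma d_tri x y z : d x z <= d x y + d y z. Proof. apply Hm. Qed.
Lemma d_zero x y : d x y = 0 -> x = y. Proof. apply Hm. Qed.

Lemma Dist_fin a B b : B b ->
  Glb_Rbar (fun r => exists b, B b /\ r = d a b) = Finite (Dist d a B)
  /\ 0 <= Dist d a B <= d a b.
Proof.
  intros Hb. unfold Dist.
  destruct (Glb_Rbar_correct (fun r => exists b, B b /\ r = d a b)) as [H1 H2].
  assert (Hle : Rbar_le (Glb_Rbar (fun r => exists b, B b /\ r = d a b)) (d a b)).
  { apply H1. eauto. }
  assert (Hge : Rbar_le 0 (Glb_Rbar (fun r => exists b, B b /\ r = d a b))).
  { apply H2. intros r [b' [_ ->]]. simpl. apply d_nonneg. }
  destruct (Glb_Rbar _) eqn:E; simpl in *; try contradiction.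
  split; [reflexivity| lra].
Qed.

Lemma Dist_le a B b : B b -> Dist d a B <= d a b.
Proof. intros Hb. apply (Dist_fin a B b Hb). Qed.

Lemma Dist_nonneg a B b : B b -> 0 <= Dist d a B.
Proof. intros Hb. apply (Dist_fin a B b Hb). Qed.

Lemma Dist_ge a B b m : B b -> (forall b, B b -> m <= d a b) -> m <= Dist d a B.
Proof.
  intros Hb Hlb. destruct (Dist_fin a B b Hb) as [E _].
  destruct (Glb_Rbar_correct (fun r => exists b, B b /\ r = d a b)) as [_ H2].
  assert (Hx : Rbar_le m (Glb_Rbar (fun r => exists b, B b /\ r = d a b))).
  { apply H2. intros r [b' [Hb' ->]]. simpl. auto. }
  rewrite E in Hx. exact Hx.
Qed.

Lemma Dist_single a c B : (forall z, B z <-> z = c) -> Dist d a B = d a c.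
Proof.
  intros HB. apply Rle_antisym.
  - apply Dist_le. apply HB; auto.
  - apply (Dist_ge a B c). apply HB; auto. intros b Hb. apply HB in Hb. subst. lra.
Qed.

Lemma excess_ge A B a : A a -> Rbar_le (Dist d a B) (excess d A B).
Proof.
  intros Ha. unfold excess. destruct (Lub_Rbar_correct (fun r => exists a, A a /\ r = Dist d a B)) as [H1 _].
  apply H1. eauto.
Qed.

Lemma excess_le A B M : (forall a, A a -> Dist d a B <= M) -> Rbar_le (excess d A B) M.
Proof.
  intros HM. unfold excess. destruct (Lub_Rbar_correct (fun r => exists a, A a /\ r = Dist d a B)) as [_ H2].
  apply H2. intros r [a [Ha ->]]. simpl. auto.
Qed.

Lemma Haus_ge1 A B : Rbar_le (excess d A B) (Haus d A B).
Proof.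
  unfold Haus, Rbar_maxi. destruct (Rbar_le_dec _ _); auto. apply Rbar_le_refl.
Qed.
Lemma Haus_ge2 A B : Rbar_le (excess d B A) (Haus d A B).
Proof.
  unfold Haus, Rbar_maxi. destruct (Rbar_le_dec _ _). apply Rbar_le_refl.
  apply Rbar_lt_le, Rbar_not_le_lt; auto.
Qed.
Lemma Haus_le A B M : Rbar_le (excess d A B) M -> Rbar_le (excess d B A) M -> Rbar_le (Haus d A B) M.
Proof. unfold Haus, Rbar_maxi. destruct (Rbar_le_dec _ _); auto. Qed.

End H.

Theorem mainTheorem9 (X : Type) (d : X -> X -> R) (lam : R)
  (W : X -> X -> R -> X -> Prop) (T : X -> X -> Prop) (alpha beta gamma : R) :
  is_metric d ->
  complete_metric d ->
  0 < lam < 1 ->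
  (forall x y mu, 0 <= mu <= 1 -> Pcl d (W x y mu)) ->
  (forall x mu, 0 < mu < 1 -> is_singleton (W x x mu) x) ->
  (forall x y mu, 0 < mu < 1 -> is_singleton (W x y mu) x -> y = x) ->
  (forall x, Pcl d (T x)) ->
  (exists x, is_sfix T x) ->
  0 <= alpha -> 0 <= beta -> 0 <= gamma -> alpha + beta + gamma < 1 ->
  (forall x y,
     Rbar_le (Haus d (TW W T lam x) (TW W T lam y))
       (Finite (alpha * d x y + beta * Dist d x (TW W T lam y)
                + gamma * Dist d y (TW W T lam x)))) ->
  exists xs : X,
    (* (i) Fix(T) = SFix(T) = {xs} *)
    ((forall x, is_fix T x <-> x = xs) /\ (forall x, is_sfix T x <-> x = xs)) /\
    (* (ii) *)
    ((exists l, 0 < l < 1 /\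
        forall x, Rbar_le (Haus d (T x) (singleton xs))
                    (Rbar_mult (Finite l) (Haus d (TW W T lam x) (singleton xs)))) ->
     forall x, forall eps, 0 < eps -> exists N, forall n, (N <= n)%nat ->
       Rbar_le (Haus d (iterT T n x) (singleton xs)) (Finite eps)) /\
    (* (iii) *)
    (forall L, 0 < L ->
        (forall x, Dist d x (TW W T lam x) <= L * Dist d x (T x)) ->
     exists xi, 0 < xi < 1 /\
       forall x, d x xs <= (1 + gamma) * L / ((1 - alpha - beta) * xi) * Dist d x (T x)).
Proof.
  intros Hm Hcomp Hlam HWcl HWxx HWinj HTcl [xs Hxs] Ha Hb Hg Hs Hc.
  assert (HTW : forall z, TW W T lam xs z <-> z = xs).
  { intros z; unfold TW, Wset; split.
    - intros [y [Hy Hw]]. apply Hxs in Hy. subst y. apply (HWxx xs lam Hlam). exact Hw.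
    - intros ->. exists xs. split. apply Hxs; auto. apply (HWxx xs lam Hlam); auto. }
  assert (HTne : forall x, exists z, T x z).
  { intros x. destruct (HTcl x) as [[z Hz] _]. eauto. }
  assert (HTWne : forall x, exists a, TW W T lam x a).
  { intros x. destruct (HTne x) as [y Hy].
    assert (Hl : 0 <= lam <= 1) by lra.
    destruct (HWcl x y lam Hl) as [[a Ha'] _]. exists a. exists y. auto. }
  assert (HA : forall x a, TW W T lam x a -> (1 - gamma) * d a xs <= (alpha + beta) * d x xs).
  { intros x a Hxa.
    pose proof (Hc x xs) as H1.
    pose proof (Rbar_le_trans _ _ _ (excess_ge d _ (TW W T lam xs) a Hxa) (Haus_ge1 d _ _)) as H2.
    pose proof (Rbar_le_trans _ _ _ H2 H1) as H3. simpl in H3.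
    rewrite (Dist_single d Hm a xs _ HTW) in H3.
    rewrite (Dist_single d Hm x xs _ HTW) in H3.
    pose proof (Dist_le d Hm xs _ a Hxa) as H4.
    rewrite (d_sym d Hm xs a) in H4.
    assert (gamma * Dist d xs (TW W T lam x) <= gamma * d a xs) by (apply Rmult_le_compat_l; auto).
    lra. }
  set (k := (alpha + beta) / (1 - gamma)).
  assert (Hk0 : 0 <= k) by (unfold k; apply Rdiv_le_0_compat; lra).
  assert (Hkeq : k * (1 - gamma) = alpha + beta) by (unfold k; field; lra).
  assert (Hk1 : k < 1).
  { assert (k * (1 - gamma) < 1 * (1 - gamma)) by lra. nra. }
  assert (HK : forall x a, TW W T lam x a -> d a xs <= k * d x xs).
  { intros x a Hxa. pose proof (HA x a Hxa). pose proof (d_nonneg d Hm x xs).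
    pose proof (d_nonneg d Hm a xs). nra. }
  assert (Hsing : forall z, singleton xs z <-> z = xs) by (intros; unfold singleton; tauto).
  exists xs. split; [split|split].
  - intros x; split.
    + intros Hfx.
      assert (Hx : TW W T lam x x).
      { exists x. split. exact Hfx. apply (HWxx x lam Hlam). auto. }
      pose proof (HK x x Hx). pose proof (d_nonneg d Hm x xs).
      apply (d_zero d Hm). nra.
    + intros ->. unfold is_fix. apply Hxs. auto.
  - intros x; split.
    + intros Hsx. 
      assert (Hfx : T x x) by (apply Hsx; auto).
      assert (Hx : TW W T lam x x).
      { exists x. split. exact Hfx. apply (HWxx x lam Hlam). auto. }
      pose proof (HK x x Hx). pose proof (d_nonneg d Hm x xs).
      apply (d_zero d Hm). nra.
    + intros ->. exact Hxs.
  - intros [l [Hl Hlb]].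
    assert (HB : forall x z, T x z -> d z xs <= l * k * d x xs).
    { intros x z Hz.
      destruct (HTWne x) as [a0 Ha0].
      assert (Hup : Rbar_le (Haus d (TW W T lam x) (singleton xs)) (k * d x xs)).
      { apply Haus_le.
        - apply excess_le; auto. intros a Ha'.
          rewrite (Dist_single d Hm a xs _ Hsing). auto.
        - apply excess_le; auto. intros a Ha'. unfold singleton in Ha'. subst a.
          pose proof (Dist_le d Hm xs _ a0 Ha0). rewrite (d_sym d Hm xs a0) in H.
          pose proof (HK x a0 Ha0). lra. }
      assert (Hlo : Rbar_le 0 (Haus d (TW W T lam x) (singleton xs))).
      { eapply Rbar_le_trans; [|apply Haus_ge1].
        eapply Rbar_le_trans; [|apply (excess_ge d _ _ a0 Ha0)].
        simpl. rewrite (Dist_single d Hm a0 xs _ Hsing). apply (d_nonneg d Hm). }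
      pose proof (Hlb x) as H1.
      pose proof (Rbar_le_trans _ _ _ (excess_ge d _ (singleton xs) z Hz) (Haus_ge1 d _ _)) as H2.
      pose proof (Rbar_le_trans _ _ _ H2 H1) as H3.
      rewrite (Dist_single d Hm z xs _ Hsing) in H3.
      destruct (Haus d (TW W T lam x) (singleton xs)) as [h| |]; simpl in *; try contradiction.
      assert (l * h <= l * (k * d x xs)) by (apply Rmult_le_compat_l; lra).
      lra. }
    intros x eps Heps.
    set (c := l * k).
    assert (Hc0 : 0 <= c) by (unfold c; nra).
    assert (Hc1 : c < 1) by (unfold c; nra).
    assert (Hit : forall n z, iterT T n x z -> d z xs <= c ^ n * d x xs).
    { induction n as [|n IH]; intros z Hz; simpl in Hz.
      - subst z. simpl. lra.
      - destruct Hz as [y [Hy Hyz]]. pose proof (IH y Hy). pose proof (HB y z Hyz).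
        simpl. fold c in H0. nra. }
    assert (Hne : forall n, exists z, iterT T n x z).
    { induction n as [|n IH]. exists x. reflexivity.
      destruct IH as [y Hy]. destruct (HTne y) as [z Hz]. exists z. exists y. auto. }
    pose proof (d_nonneg d Hm x xs) as Hd0.
    assert (Hpos : 0 < eps / (d x xs + 1)) by (apply Rdiv_lt_0_compat; lra).
    destruct (pow_lt_1_zero c ltac:(rewrite Rabs_right; lra) _ Hpos) as [N HN].
    exists N. intros n Hn.
    assert (Hcn : c ^ n * d x xs <= eps).
    { pose proof (HN n Hn) as H1. rewrite Rabs_right in H1 by (apply Rle_ge, pow_le; lra).
      assert (H2 : c ^ n * (d x xs + 1) < eps).
      { apply (Rmult_lt_compat_r (d x xs + 1)) in H1; [|lra].
        unfold Rdiv in H1. rewrite Rmult_assoc, Rinv_l in H1 by lra. lra. }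
      pose proof (pow_le c n Hc0). nra. }
    destruct (Hne n) as [z0 Hz0].
    apply Haus_le.
    + apply excess_le; auto. intros a Ha'.
      rewrite (Dist_single d Hm a xs _ Hsing). pose proof (Hit n a Ha'). lra.
    + apply excess_le; auto. intros a Ha'. unfold singleton in Ha'. subst a.
      pose proof (Dist_le d Hm xs _ z0 Hz0). rewrite (d_sym d Hm xs z0) in H.
      pose proof (Hit n z0 Hz0). lra.
  - intros L HL HLb.
    set (r := (1 + gamma) * (1 - (alpha + beta + gamma)) / ((1 - (alpha + beta)) * (1 - gamma))).
    assert (Hr : 0 < r).
    { unfold r. apply Rdiv_lt_0_compat. nra. nra. }
    exists (r / (1 + r)). split.
    { split. apply Rdiv_lt_0_compat; lra.
      apply (Rmult_lt_reg_r (1 + r)); [lra|]. unfold Rdiv. rewrite Rmult_assoc, Rinv_l by lra. lra. }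
    intros x.
    destruct (HTWne x) as [a0 Ha0].
    destruct (HTne x) as [y0 Hy0].
    assert (H1 : (1 - k) * d x xs <= Dist d x (TW W T lam x)).
    { apply (Dist_ge d Hm x _ a0). exact Ha0. intros b Hb'.
      pose proof (HK x b Hb'). pose proof (d_tri d Hm x b xs). lra. }
    pose proof (HLb x) as H2.
    pose proof (Dist_nonneg d Hm x _ y0 Hy0) as H3.
    assert (Heq : (1 + gamma) * L / ((1 - alpha - beta) * (r / (1 + r))) = (1 + r) * L / (1 - k)).
    { unfold k, r. field. repeat split; try lra; try nra. }
    rewrite Heq.
    set (Dx := Dist d x (T x)) in *.
    assert (Hx1 : d x xs <= L * Dx / (1 - k)).
    { apply (Rmult_le_reg_r (1 - k)); [lra|]. unfold Rdiv. rewrite Rmult_assoc, Rinv_l by lra. lra. }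
    assert (L * Dx / (1 - k) <= (1 + r) * L / (1 - k) * Dx).
    { unfold Rdiv. assert (0 <= L * Dx * / (1 - k)).
      { apply Rmult_le_pos. nra. left. apply Rinv_0_lt_compat. lra. }
      nra. }
    lra.
Qed.
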